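(* Let $N\ge 1$ and $R\ge 1$, and for each $n=1,\ldots,N$ let $\mathbf{A}^{(n)}\in\mathbb{R}^{I_n\times R}$ be a random matrix with rows $\mathbf{a}^{(n)}_{i_n}\in\mathbb{R}^R$ (written as column vectors), $i_n=1,\ldots,I_n$, all entries having finite second moments. Assume the matrices $\mathbf{A}^{(1)},\ldots,\mathbf{A}^{(N)}$ are independent and that, for all $n$ and all $i_n$, the row vectors $\{\mathbf{a}^{(n)}_{i_n}\}$ are independent. Then $$\mathbb{E}\left[ \Big(\bigodot_n \mathbf{A}^{(n)}\Big)^T \Big(\bigodot_n \mathbf{A}^{(n)}\Big)\right] =\sum_{i_1=1}^{I_1}\cdots\sum_{i_N=1}^{I_N} \mathbb{E}\left[ \mathbf{a}^{(1)}_{i_1}\mathbf{a}^{(1)T}_{i_1}\right]\circledast \mathbb{E}\left[ \mathbf{a}^{(2)}_{i_2}\mathbf{a}^{(2)T}_{i_2}\right]\circledast\cdots\circledast \mathbb{E}\left[ \mathbf{a}^{(N)}_{i_N}\mathbf{a}^{(N)T}_{i_N}\right],$$ where $\mathbb{E}\left[ \mathbf{a}^{(n)}_{i_n}\mathbf{a}^{(n)T}_{i_n}\right] = \mathbb{E}[\mathbf{a}_{i_n}^{(n)}]\mathbb{E}[\mathbf{a}_{i_n}^{(n)}]^T + \mathrm{Var}\big(\mathbf{a}^{(n)}_{i_n}\big)$, with $\mathrm{Var}$ denoting the covariance matrix.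
   Context: $\circledast$ denotes the Hadamard (entrywise) product of matrices of the same size. For matrices $\mathbf{A}\in\mathbb{R}^{I\times K}$, $\mathbf{B}\in\mathbb{R}^{J\times K}$, the Khatri–Rao product $\mathbf{A}\odot\mathbf{B}\in\mathbb{R}^{IJ\times K}$ is the columnwise Kronecker product, and $\bigodot_n \mathbf{A}^{(n)} = \mathbf{A}^{(N)}\odot\mathbf{A}^{(N-1)}\odot\cdots\odot\mathbf{A}^{(1)}$, a matrix of size $\prod_n I_n\times R$ whose rows are exactly the vectors $\mathbf{a}^{(1)}_{i_1}\circledast\cdots\circledast\mathbf{a}^{(N)}_{i_N}$ (transposed) as $(i_1,\ldots,i_N)$ ranges over all index tuples. *)

(* Defs.v *)
From HB Require Import structures.
From mathcomp Require Import all_boot all_order all_algebra.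
From mathcomp Require Import all_classical all_reals all_analysis.
Set Implicit Arguments. Unset Strict Implicit. Unset Printing Implicit Defensive.
Import Order.TTheory GRing.Theory Num.Theory.
Local Open Scope classical_set_scope.
Local Open Scope ring_scope.

Definition hadamard (R : pzRingType) m n (A B : 'M[R]_(m, n)) : 'M[R]_(m, n) :=
  map2_mx (fun x y => x * y) A B.

(* Binary Khatri-Rao product (columnwise Kronecker product):
   row (i, j) of A ⊙ B, at position i * n + j, is the entrywise product of
   row i of A and row j of B. *)
Definition khatri_rao2 (R : pzRingType) m n K (A : 'M[R]_(m, K)) (B : 'M[R]_(n, K))
  : 'M[R]_(m * n, K) :=
  \matrix_(k, r) let ij := enum_val (cast_ord (esym (mxvec_cast m n)) k) in
                 A ij.1 r * B ij.2 r.

(* Iterated Khatri-Rao product of a list [:: M_1; ...; M_p] of matrices with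
   K columns: M_1 ⊙ (M_2 ⊙ (... ⊙ (M_p ⊙ 1))), where the all-ones 1 x K row
   is a neutral element (it does not change the row order). *)
Definition khatri_rao_seq (R : pzRingType) K (s : seq {m : nat & 'M[R]_(m, K)})
  : {m : nat & 'M[R]_(m, K)} :=
  foldr (fun x acc => existT _ _ (khatri_rao2 (projT2 x) (projT2 acc)))
        (existT _ 1%N (const_mx 1)) s.

(* \bigodot_n A^(n) = A^(N) ⊙ A^(N-1) ⊙ ... ⊙ A^(1)  (n indexed by 'I_N). *)
Definition khatri_rao (R : pzRingType) N (I : 'I_N -> nat) K
  (A : forall n : 'I_N, 'M[R]_(I n, K)) : {m : nat & 'M[R]_(m, K)} :=
  khatri_rao_seq [seq existT (fun m => 'M[R]_(m, K)) (I n) (A n) | n <- rev (enum 'I_N)].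

Definition gen_sigma (T : Type) (R : realType) (J : Type) (f : J -> T -> R)
  : set (set T) :=
  <<s [set E | exists j B, measurable B /\ E = f j @^-1` B] >>.

Definition mutually_independent d (T : measurableType d) (R : realType)
  (P : probability T R) (J : finType) (F : J -> set (set T)) : Prop :=
  forall (S : {set J}) (E : J -> set T),
    (forall j, j \in S -> F j (E j)) ->
    P (\big[setI/setT]_(j in S) E j) = (\prod_(j in S) P (E j))%E.

(* Main.v *)
Require Import Defs.
From HB Require Import structures.
From mathcomp Require Import all_boot all_order all_algebra.
From mathcomp Require Import all_classical all_reals all_analysis.
From mathcomp Require Import measurable_realfun measurable_fun_approximation.
Set Implicit Arguments. Unset Strict Implicit. Unset Printing Implicit Defensive.
Import Order.TTheory GRing.Theory Num.Theory.
Import numFieldNormedType.Exports.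
Local Open Scope classical_set_scope.
Local Open Scope ring_scope.
Section lemA.
Context d (T : measurableType d) (R : realType) (P : probability T R).
Local Open Scope ereal_scope.

Definition Hmeas (H : set (set T)) (Y : T -> R) :=
  forall B : set R, measurable B -> H (Y @^-1` B).

Variables (H : set (set T)) (Hm : forall B, H B -> measurable B).
Variables (X : T -> R) (X0 : forall x, (0 <= X x)%R) (mX : measurable_fun setT X).
Hypothesis XB : forall B, H B ->
  \int[P]_x (X x * \1_B x)%:E = \int[P]_x (X x)%:E * P B.
Hypothesis Xfin : \int[P]_x (X x)%:E \is a fin_num.

Definition Good (g : T -> R) :=
  \int[P]_x (X x * g x)%:E = \int[P]_x (X x)%:E * \int[P]_x (g x)%:E.

Lemma good_indic B : H B -> Good (\1_B).
Proof.
move=> HB; rewrite /Good XB// integral_indic// ?setIT//; exact: Hm.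
Qed.

Lemma good_add (f g : T -> R) : (forall x, (0 <= f x)%R) -> (forall x, (0 <= g x)%R) ->
  measurable_fun setT f -> measurable_fun setT g ->
  Good f -> Good g -> Good (f \+ g)%R.
Proof.
move=> f0 g0 mf mg Gf Gg; rewrite /Good.
under eq_integral do rewrite /= mulrDr EFinD.
rewrite ge0_integralD//; last 4 first.
- by move=> x _; rewrite lee_fin mulr_ge0.
- by apply/measurable_EFinP; exact: measurable_funM.
- by move=> x _; rewrite lee_fin mulr_ge0.
- by apply/measurable_EFinP; exact: measurable_funM.
under [X in _ = _ * X]eq_integral do rewrite /= EFinD.
rewrite [X in _ = _ * X]ge0_integralD//; last 4 first.
- by move=> x _; rewrite lee_fin.
- exact/measurable_EFinP.
- by move=> x _; rewrite lee_fin.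
- exact/measurable_EFinP.
rewrite Gf Gg -ge0_muleDr//; apply: integral_ge0 => x _; rewrite lee_fin //.
Qed.

Lemma good_scale (c : R) (f : T -> R) : (0 <= c)%R -> (forall x, (0 <= f x)%R) ->
  measurable_fun setT f -> Good f -> Good (fun x => c * f x)%R.
Proof.
move=> c0 f0 mf Gf; rewrite /Good.
under eq_integral do rewrite mulrCA EFinM.
rewrite ge0_integralZl_EFin//; last 2 first.
- by move=> x _; rewrite lee_fin mulr_ge0.
- by apply/measurable_EFinP; exact: measurable_funM.
under [X in _ = _ * X]eq_integral do rewrite EFinM.
rewrite [X in _ = _ * X]ge0_integralZl_EFin//; last 2 first.
- by move=> x _; rewrite lee_fin.
- exact/measurable_EFinP.
by rewrite Gf muleCA.
Qed.

Lemma good0 : Good (fun=> 0%R).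
Proof.
rewrite /Good; under eq_integral do rewrite mulr0.
by rewrite integral0 mule0.
Qed.

Lemma good_sum (I : Type) (s : seq I) (F : I -> T -> R) :
  (forall i x, (0 <= F i x)%R) -> (forall i, measurable_fun setT (F i)) ->
  (forall i, Good (F i)) -> Good (fun x => \sum_(i <- s) F i x)%R.
Proof.
move=> F0 mF GF; elim: s => [|a s IH].
  by under eq_fun do rewrite big_nil; exact: good0.
under eq_fun do rewrite big_cons.
apply: good_add => //.
- by move=> x; rewrite sumr_ge0.
- by apply: measurable_sum.
Qed.

Variables (Y : T -> R) (Y0 : forall x, (0 <= Y x)%R) (hY : Hmeas H Y).

Lemma mY : measurable_fun setT Y.
Proof. by move=> _ B mB; rewrite setTI; apply: Hm; exact: hY. Qed.

Lemma HA n k : H (dyadic_approx setT (EFin \o Y) n k).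
Proof.
rewrite /dyadic_approx; case: ifPn => _; last first.
  by have := @hY set0 measurable0; rewrite preimage_set0.
have -> : setT `&` [set x | (EFin \o Y) x \in [set x%:E | x in [set` dyadic_itv R n k]]]
   = Y @^-1` [set` dyadic_itv R n k].
  apply/seteqP; split => x /=.
    by move=> [_ /set_mem [r rI [<-]]].
  by move=> h; split => //; apply/mem_set; exists (Y x).
by apply: hY; exact: measurable_itv.
Qed.

Lemma HB n : H (integer_approx setT (EFin \o Y) n).
Proof.
have -> : integer_approx setT (EFin \o Y) n = Y @^-1` `[n%:R, +oo[%classic.
  apply/seteqP; split => x /=; rewrite /integer_approx /= in_itv /= andbT lee_fin.
    by move=> [].
  by move=> h; split.
by apply: hY; exact: measurable_itv.
Qed.

Lemma good_approx n : Good (approx setT (EFin \o Y) n).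
Proof.
pose f := (fun x => (\sum_(k < n * 2 ^ n) k%:R / 2 ^+ n * \1_(dyadic_approx setT (EFin \o Y) n k) x) : R)%R.
pose g := (fun x => (n%:R * \1_(integer_approx setT (EFin \o Y) n) x : R))%R.
have -> : approx setT (EFin \o Y) n = (f \+ g)%R by [].
have mA k : measurable (dyadic_approx setT (EFin \o Y) n k) by apply: Hm; exact: HA.
have mB : measurable (integer_approx setT (EFin \o Y) n) by apply: Hm; exact: HB.
apply: good_add.
- by move=> x; rewrite /f sumr_ge0// => k _; rewrite mulr_ge0.
- by move=> x; rewrite /g mulr_ge0.
- by apply: measurable_sum => k; apply: measurable_funM => //; exact: measurable_indic.
- by apply: measurable_funM => //; exact: measurable_indic.
- rewrite /f.
  apply: good_sum.
  + by move=> k x; rewrite mulr_ge0.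
  + by move=> k; apply: measurable_funM => //; exact: measurable_indic.
  + by move=> k; apply: good_scale => //; exact/good_indic/HA.
- by rewrite /g; apply: good_scale => //; exact/good_indic/HB.
Qed.

Lemma approx_ge0 n x : (0 <= approx setT (EFin \o Y) n x)%R.
Proof.
rewrite /approx addr_ge0 ?mulr_ge0// sumr_ge0// => k _.
Qed.

Lemma mapprox n : measurable_fun setT (approx setT (EFin \o Y) n).
Proof.
rewrite /approx; apply: measurable_funD.
  apply: measurable_sum => k; apply: measurable_funM => //.
  by apply: measurable_indic; apply: Hm; exact: HA.
by apply: measurable_funM => //; apply: measurable_indic; apply: Hm; exact: HB.
Qed.

Lemma cvg_approxY x : approx setT (EFin \o Y) n x @[n --> \oo] --> Y x.
Proof.
have := @cvg_approx _ _ _ setT (EFin \o Y) x (fun x _ => Y0 x : (0 <= (EFin \o Y) x)%E) I (ltry _).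
by [].
Qed.

Lemma lemA : \int[P]_x (X x * Y x)%:E = \int[P]_x (X x)%:E * \int[P]_x (Y x)%:E.
Proof.
pose g := approx setT (EFin \o Y).
have ndg x : nondecreasing_seq (g ^~ x).
  by move=> m n mn; exact/lefP/nd_approx.
have h1 : \int[P]_x (X x * g n x)%:E @[n --> \oo] --> \int[P]_x (X x * Y x)%:E.
  have := @cvg_monotone_convergence _ _ _ P setT measurableT (fun n x => (X x * g n x)%:E).
  have -> : (fun x => limn (fun n => (X x * g n x)%:E)) = (fun x => (X x * Y x)%:E).
    apply/funext => x; apply/cvg_lim => //; apply: cvg_EFin; first exact: nearW.
    exact: (cvgMl_tmp (a:=X x) (@cvg_approxY x)).
  apply.
  - by move=> n; apply/measurable_EFinP; apply: measurable_funM => //; exact: mapprox.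
  - by move=> n x _; rewrite lee_fin mulr_ge0// approx_ge0.
  - by move=> x _ m n mn; rewrite lee_fin ler_wpM2l// ndg.
have h2 : \int[P]_x (g n x)%:E @[n --> \oo] --> \int[P]_x (Y x)%:E.
  have := @cvg_monotone_convergence _ _ _ P setT measurableT (fun n x => (g n x)%:E).
  have -> : (fun x => limn (fun n => (g n x)%:E)) = (fun x => (Y x)%:E).
    apply/funext => x; apply/cvg_lim => //; apply: cvg_EFin; first exact: nearW.
    exact: (@cvg_approxY x).
  apply.
  - by move=> n; apply/measurable_EFinP; exact: mapprox.
  - by move=> n x _; rewrite lee_fin approx_ge0.
  - by move=> x _ m n mn; rewrite lee_fin ndg.
have h3 := cvgeZl Xfin h2.
have e : (fun n => \int[P]_x (X x * g n x)%:E) = (fun n => \int[P]_x (X x)%:E * \int[P]_x (g n x)%:E).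
  by apply/funext => n; exact: good_approx.
rewrite e in h1.
exact: (cvg_unique _ h1 h3).
Qed.

End lemA.
Section indep_prod.
Context d (T : measurableType d) (R : realType) (P : probability T R).
Local Open Scope ereal_scope.
Variables (N : nat) (F : 'I_N -> set (set T)).
Hypothesis Fm : forall n B, F n B -> measurable B.
Hypothesis FT : forall n, F n setT.
Hypothesis Find : mutually_independent P F.

Lemma prod_indic (S : pred 'I_N) (E : 'I_N -> set T) x :
  (\prod_(n | S n) \1_(E n) x = \1_(\big[setI/setT]_(n | S n) E n) x :> R)%R.
Proof.
apply: (big_rec2 (fun a b => a = \1_b x)).
  by rewrite indicT.
by move=> i a b _ ->; rewrite indicI.
Qed.

Lemma claim k : forall (G : {set 'I_N}), #|G| = k ->
  forall (Y : 'I_N -> T -> R) (E : 'I_N -> set T),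
  (forall n x, (0 <= Y n x)%R) -> (forall n, measurable_fun setT (Y n)) ->
  (forall n, \int[P]_x (Y n x)%:E \is a fin_num) ->
  (forall n, n \in G -> Hmeas (F n) (Y n)) ->
  (forall n, n \notin G -> F n (E n) /\ Y n = \1_(E n)) ->
  \int[P]_x (\prod_n Y n x)%:E = \prod_n \int[P]_x (Y n x)%:E.
Proof.
elim: k => [|k IH] G cG Y E Y0 mY Yfin hY YE.
  have YE' n : F n (E n) /\ Y n = \1_(E n).
    by apply: YE; apply/negP => nG; move: cG; rewrite (cardsD1 n G) nG.
  under eq_integral do under eq_bigr do rewrite (YE' _).2.
  under [RHS]eq_bigr do rewrite (YE' _).2.
  under eq_integral do rewrite (prod_indic predT).
  rewrite integral_indic//; last first.
    by apply: bigsetI_measurable => n _; apply: (Fm (YE' n).1).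
  rewrite setIT.
  rewrite (_ : \big[setI/setT]_n E n = \big[setI/setT]_(n in setTfor 'I_N) E n); last first.
    by apply: eq_bigl => j; rewrite finset.in_setT.
  apply: eq_trans (Find (S := setTfor 'I_N) (E := E) (fun j _ => (YE' j).1)) _.
  apply: eq_big => [j|n _]; first exact: finset.in_setT.
  rewrite integral_indic ?setIT//; exact: (Fm (YE' n).1).
have [m mG] : exists m, m \in G.
  by apply/card_gt0P; rewrite cG.
pose G' := G :\ m.
have cG' : #|G'| = k by move: cG; rewrite (cardsD1 m G) mG add1n => -[].
pose X x := (\prod_(n | n != m) Y n x)%R.
have mX : measurable_fun setT X.
  rewrite /X; under eq_fun do rewrite big_mkcond /=.
  apply: (@measurable_prod _ _ _ _ _ _ (fun i x => if i != m then Y i x else 1%R)).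
  by move=> n _; case: (n != m) => //; exact: measurable_cst.
have X0 x : (0 <= X x)%R by rewrite prodr_ge0.
have repl (B : set T) : F m B ->
    \int[P]_x (\prod_n (if n == m then \1_B else Y n) x)%:E
    = P B * \prod_(n | n != m) \int[P]_x (Y n x)%:E.
  move=> FB.
  rewrite (IH G' cG' (fun n => if n == m then \1_B else Y n)
              (fun n => if n == m then B else E n)); last 5 first.
  - by move=> n x; case: (n == m).
  - move=> n; case: (n == m) => //; apply: measurable_indic; exact: Fm FB.
  - move=> n; case: (n == m) => //; rewrite integral_indic ?setIT ?fin_num_measure//;
    exact: Fm FB.
  - by move=> n; rewrite !inE => /andP[/negbTE -> nG]; apply: hY.
  - move=> n; rewrite !inE; case: eqP => [-> _|nm] /=; first by split.
    by move=> nG; apply: YE.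
  rewrite (bigD1 m)//= eqxx integral_indic ?setIT//; last exact: Fm FB.
  congr (_ * _); apply: eq_bigr => n /negbTE ->//.

have intX : \int[P]_x (X x)%:E = \prod_(n | n != m) \int[P]_x (Y n x)%:E.
  have := repl setT (FT m); rewrite probability_setT mul1e => <-.
  apply: eq_integral => x _; congr EFin; rewrite (bigD1 m)//= eqxx indicT /= mul1r.
  by apply: eq_bigr => n /negbTE ->.
have XB B : F m B -> \int[P]_x (X x * \1_B x)%:E = \int[P]_x (X x)%:E * P B.
  move=> FB; rewrite intX; apply: eq_trans _ (muleC _ _); apply: eq_trans _ (repl _ FB); apply: eq_integral => x _; congr EFin.
  rewrite (bigD1 m)//= eqxx mulrC; congr (_ * _)%R.
  by apply: eq_bigr => n /negbTE ->.
have Xfin : \int[P]_x (X x)%:E \is a fin_num by rewrite intX; apply: prode_fin_num.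
have L := lemA (Fm (n:=m)) X0 mX XB Xfin (Y0 m) (hY m mG).
rewrite intX in L; rewrite (bigD1 m)//=.
apply: eq_trans _ (muleC _ _); apply: eq_trans _ L.
by apply: eq_integral => x _; congr EFin; rewrite (bigD1 m)//= mulrC.
Qed.

Lemma Hmeas_meas n (f : T -> R) : Hmeas (F n) f -> measurable_fun setT f.
Proof. by move=> hf _ B mB; rewrite setTI; apply: (Fm (n:=n)); exact: hf. Qed.

Lemma Hmeas_pos n (f : T -> R) : Hmeas (F n) f -> Hmeas (F n) (f^\+)%R.
Proof.
move=> hf B mB; have := hf [set r : R | B (Num.max r 0%R)].
apply; have := @measurable_funrpos _ _ R setT (@id R) (@measurable_id _ _ setT) measurableT B mB.
by rewrite setTI.
Qed.

Lemma Hmeas_neg n (f : T -> R) : Hmeas (F n) f -> Hmeas (F n) (f^\-)%R.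
Proof.
move=> hf B mB; have := hf [set r : R | B (Num.max (- r)%R 0%R)].
apply; have := @measurable_funrneg _ _ R setT (@id R) (@measurable_id _ _ setT) measurableT B mB.
by rewrite setTI.
Qed.

Lemma prod_ge0E (Y : 'I_N -> T -> R) :
  (forall n x, (0 <= Y n x)%R) -> (forall n, Hmeas (F n) (Y n)) ->
  (forall n, \int[P]_x (Y n x)%:E \is a fin_num) ->
  \int[P]_x (\prod_n Y n x)%:E = \prod_n \int[P]_x (Y n x)%:E.
Proof.
move=> Y0 hY Yfin.
apply: (@claim #|setTfor 'I_N| (setTfor 'I_N) erefl Y (fun=> setT)) => //.
- by move=> n; exact: Hmeas_meas (hY n).
- by move=> n; rewrite finset.in_setT.
Qed.


Lemma fin_int (f : T -> R) : f \in Lfun P 1 -> \int[P]_x (f x)%:E \is a fin_num.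
Proof. by move=> /Lfun1_integrable h; exact: integrable_fin_num h. Qed.

Lemma intB (f g : T -> R) : f \in Lfun P 1 -> g \in Lfun P 1 ->
  \int[P]_x (f x - g x)%:E = \int[P]_x (f x)%:E - \int[P]_x (g x)%:E.
Proof.
move=> /Lfun1_integrable hf /Lfun1_integrable hg.
under eq_integral do rewrite EFinB.
exact: integralB_EFin.
Qed.

Lemma claimS k : forall (G : {set 'I_N}), #|G| = k ->
  forall (X : 'I_N -> T -> R),
  (forall n, X n \in Lfun P 1) -> (forall n, Hmeas (F n) (X n)) ->
  (forall n, n \notin G -> forall x, (0 <= X n x)%R) ->
  (fun x => \prod_n X n x)%R \in Lfun P 1 /\
  \int[P]_x (\prod_n X n x)%:E = (\prod_n fine (\int[P]_x (X n x)%:E))%:E.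
Proof.
elim: k => [|k IH] G cG X LX hX X0.
  have X0' n x : (0 <= X n x)%R.
    by apply: X0; apply/negP => nG; move: cG; rewrite (cardsD1 n G) nG.
  have hE := prod_ge0E X0' hX (fun n => fin_int (LX n)).
  have hE' : \int[P]_x (\prod_n X n x)%:E = (\prod_n fine (\int[P]_x (X n x)%:E))%:E.
    rewrite hE -prodEFin; apply: eq_bigr => n _; rewrite fineK//; exact: fin_int.
  split => //.
  apply/Lfun1_integrable; apply/integrableP; split.
    apply/measurable_EFinP; apply: measurable_prod => n _; exact: Hmeas_meas (hX n).
  rewrite (eq_integral (fun x => (\prod_n X n x)%:E)); last first.
    by move=> x _; rewrite /= ger0_norm ?prodr_ge0.
  by rewrite hE' ltry.
have [m mG] : exists m, m \in G by apply/card_gt0P; rewrite cG.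
pose G' := G :\ m.
have cG' : #|G'| = k by move: cG; rewrite (cardsD1 m G) mG add1n => -[].
pose Xp := fun n => if n == m then (X m)^\+%R else X n.
pose Xn := fun n => if n == m then (X m)^\-%R else X n.
have LXm : X m \in Lfun P 1 := LX m.
have Lp : (X m)^\+%R \in Lfun P 1.
  by apply/Lfun1_integrable; apply: integrable_funrpos => //; apply/Lfun1_integrable.
have Ln : (X m)^\-%R \in Lfun P 1.
  by apply/Lfun1_integrable; apply: integrable_funrneg => //; apply/Lfun1_integrable.
have LXp n : Xp n \in Lfun P 1 by rewrite /Xp; case: (n == m).
have LXn n : Xn n \in Lfun P 1 by rewrite /Xn; case: (n == m).
have hXp n : Hmeas (F n) (Xp n).
  by rewrite /Xp; case: eqP => [->|_]//; exact: Hmeas_pos.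
have hXn n : Hmeas (F n) (Xn n).
  by rewrite /Xn; case: eqP => [->|_]//; exact: Hmeas_neg.
have Xp0 n : n \notin G' -> forall x, (0 <= Xp n x)%R.
  rewrite /Xp !inE; case: eqP => [_ _ x|nm nG x] /=; [exact: funrpos_ge0|exact: X0].
have Xn0 n : n \notin G' -> forall x, (0 <= Xn n x)%R.
  rewrite /Xn !inE; case: eqP => [_ _ x|nm nG x] /=; [exact: funrneg_ge0|exact: X0].
have [LP EP] := IH G' cG' Xp LXp hXp Xp0.
have [LN EN] := IH G' cG' Xn LXn hXn Xn0.
have e : (fun x => \prod_n X n x)%R =
    ((fun x => \prod_n Xp n x) \- (fun x => \prod_n Xn n x))%R.
  apply/funext => x /=.
  rewrite (bigD1 m)// [in RHS](bigD1 m)// [X in (_ - X)%R](bigD1 m)//= /Xp /Xn !eqxx.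
  have -> : (\prod_(n | n != m) (if n == m then (X m)^\+ else X n) x = \prod_(n | n != m) X n x)%R.
    by apply: eq_bigr => n /negbTE ->.
  have -> : (\prod_(n | n != m) (if n == m then (X m)^\- else X n) x = \prod_(n | n != m) X n x)%R.
    by apply: eq_bigr => n /negbTE ->.
  have hx : ((X m)^\+ x - (X m)^\- x = X m x)%R := congr1 (fun g => g x) (funrposBneg (X m)).
  by rewrite -mulrBl hx.
rewrite e; split; first exact: rpredB.
rewrite (eq_integral (fun x => (\prod_n Xp n x - \prod_n Xn n x)%:E)%R); last first.
  by move=> x _; rewrite (congr1 (fun g => g x) e).
rewrite intB// EP EN -EFinB; congr EFin.
rewrite (bigD1 m)// [X in (_ - X)%R](bigD1 m)//= [in RHS](bigD1 m)//= /Xp /Xn !eqxx.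
have q1 : (\prod_(i | i != m) fine (\int[P]_x ((if i == m then (X m)^\+ else X i) x)%:E)
   = \prod_(i | i != m) fine (\int[P]_x (X i x)%:E))%R by apply: eq_bigr => i /negbTE ->.
have q2 : (\prod_(i | i != m) fine (\int[P]_x ((if i == m then (X m)^\- else X i) x)%:E)
   = \prod_(i | i != m) fine (\int[P]_x (X i x)%:E))%R by apply: eq_bigr => i /negbTE ->.
rewrite q1 q2 -mulrBl; congr (_ * _)%R.
rewrite -fineB; try exact: fin_int.
congr fine; rewrite -intB//.
apply: eq_integral => x _.
have hx : ((X m)^\+ x - (X m)^\- x = X m x)%R := congr1 (fun g => g x) (funrposBneg (X m)).
by rewrite hx.
Qed.


Lemma prod_signed (X : 'I_N -> T -> R) :
  (forall n, X n \in Lfun P 1) -> (forall n, Hmeas (F n) (X n)) ->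
  \int[P]_x (\prod_n X n x)%:E = (\prod_n fine (\int[P]_x (X n x)%:E))%:E.
Proof.
move=> LX hX.
have hn : forall n, n \notin setTfor 'I_N -> forall x, (0 <= X n x)%R.
  by move=> n; rewrite finset.in_setT.
by have [_ ->] := @claimS #|setTfor 'I_N| (setTfor 'I_N) erefl X LX hX hn.
Qed.

End indep_prod.
Section cov.
Context d (T : measurableType d) (R : realType) (P : probability T R).
Local Open Scope ereal_scope.

Lemma cov_part (a b : T -> R) : a \in Lfun P 2%:E -> b \in Lfun P 2%:E ->
  fine 'E_P[fun w => (a w * b w)%R] =
  (fine 'E_P[a] * fine 'E_P[b] + fine (covariance P a b))%R.
Proof.
move=> la lb.
have la1 : a \in Lfun P 1 by apply: Lfun_subset12 => //; exact: fin_num_measure.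
have lb1 : b \in Lfun P 1 by apply: Lfun_subset12 => //; exact: fin_num_measure.
have lab := Lfun2_mul_Lfun1 la lb.
rewrite covarianceE//.
have fa := expectation_fin_num la1.
have fb := expectation_fin_num lb1.
have fab : 'E_P[(a * b)%R] \is a fin_num by exact: expectation_fin_num.
rewrite fineB ?fin_numM// fineM//.
have -> : 'E_P[fun w => (a w * b w)%R] = 'E_P[(a * b)%R] by [].
by rewrite addrC subrK.
Qed.
End cov.
Lemma dffun_distr (R : comPzRingType) (I0 : finType) (T_ : I0 -> finType)
   (f : forall i, T_ i -> R) :
  \sum_(t : {dffun forall i, T_ i}) \prod_i f i (t i) = \prod_i \sum_(j : T_ i) f i j.
Proof.
pose P_ i := [ffun j => f i j].
rewrite (reindex (@dffun_of_fprod I0 T_)); last exact/onW_bij/dffun_of_fprod_bij.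
under eq_bigr do under eq_bigr do rewrite ffunE.
have e1 : forall t : fprod T_, \prod_(i in I0) P_ i (t i) = \prod_i f i (t i).
  by move=> t; apply: eq_big => // i; rewrite ffunE.
transitivity (\sum_(t : fprod T_) \prod_(i in I0) P_ i (t i)).
  by apply: eq_bigr => t _; rewrite e1.
rewrite (@big_fprod R 0 1 *%R +%R I0 T_ P_).
rewrite -(bigA_distr_big_dep (fun i => tagged_with T_ i) (fun i j => untag 0 (P_ i) j)).
apply: eq_bigr => i _.
rewrite (eq_bigr (fun j => P_ i j)); last by move=> j _; rewrite ffunE.
rewrite (big_tag (fun i j => P_ i j) i).
by apply: eq_big => // j.
Qed.
Section kr.
Variable R : comPzRingType.

Lemma kr2_sum m n K (A : 'M[R]_(m, K)) (B : 'M[R]_(n, K)) r s :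
  \sum_(k < m * n) khatri_rao2 A B k r * khatri_rao2 A B k s =
  (\sum_(i < m) A i r * A i s) * (\sum_(j < n) B j r * B j s).
Proof.
rewrite /khatri_rao2; under eq_bigr do rewrite !mxE.
pose h (p : 'I_m * 'I_n) : 'I_(m * n) := cast_ord (mxvec_cast m n) (enum_rank p).
rewrite (reindex h); last first.
  exists (fun k => enum_val (cast_ord (esym (mxvec_cast m n)) k)) => [p _|k _].
    by rewrite /h cast_ordK enum_rankK.
  by rewrite /h enum_valK cast_ordKV.
under eq_bigr do rewrite /h cast_ordK enum_rankK.
rewrite -(pair_big xpredT xpredT (fun i j => A i r * B j r * (A i s * B j s))) /=.
rewrite big_distrl /=; apply: eq_bigr => i _.
rewrite big_distrr /=; apply: eq_bigr => j _.
by rewrite mulrACA.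
Qed.

Lemma krseq_sum K (l : seq {m : nat & 'M[R]_(m, K)}) r s :
  \sum_(k < projT1 (khatri_rao_seq l)) projT2 (khatri_rao_seq l) k r * projT2 (khatri_rao_seq l) k s
  = \prod_(x <- l) \sum_(i < projT1 x) projT2 x i r * projT2 x i s.
Proof.
elim: l => [|x l IH] /=.
  by rewrite big_nil big_ord1 !mxE mulr1.
by rewrite big_cons -IH kr2_sum.
Qed.

Lemma kr_gram N (I : 'I_N -> nat) K (A : forall n : 'I_N, 'M[R]_(I n, K)) r s :
  (let KR := projT2 (khatri_rao A) in KR^T *m KR) r s =
  \prod_n \sum_(i < I n) A n i r * A n i s.
Proof.
rewrite /= mxE.
rewrite (eq_bigr (fun j => projT2 (khatri_rao A) j r * projT2 (khatri_rao A) j s)); last first.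
  by move=> j _; rewrite mxE.
rewrite /khatri_rao krseq_sum big_map.
rewrite big_rev.
by rewrite big_enum.
Qed.
End kr.
Lemma hadamard_prod (R : pzRingType) N K (M : 'I_N -> 'M[R]_K) r s :
  (\big[@hadamard R K K/const_mx 1]_(n < N) M n) r s = \prod_(n < N) M n r s.
Proof.
apply: (big_rec2 (fun (a : 'M[R]_K) (b : R) => a r s = b)); first by rewrite mxE.
by move=> i a b _ <-; rewrite /hadamard mxE.
Qed.

Theorem theorem1 (d : measure_display) (T : measurableType d) (R : realType)
  (P : probability T R) (N K : nat) (I : 'I_N -> nat)
  (A : forall n : 'I_N, T -> 'M[R]_(I n, K)) :
  (0 < N)%N -> (0 < K)%N ->
  (* all entries have finite second moments *)
  (forall n i r, (fun w => A n w i r) \in Lfun P 2%:E) ->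
  (* the matrices A^(1), ..., A^(N) are independent *)
  mutually_independent P
    (fun n : 'I_N => gen_sigma (fun ir : 'I_(I n) * 'I_K => fun w => A n w ir.1 ir.2)) ->
  (* for each n, the rows a^(n)_(i_n) are independent *)
  (forall n : 'I_N, mutually_independent P
     (fun i : 'I_(I n) => gen_sigma (fun r : 'I_K => fun w => A n w i r))) ->
  let Eaa n i : 'M[R]_K :=
    \matrix_(r, s) fine ('E_P[fun w => (A n w i r * A n w i s)%R])%E in
  (forall r s : 'I_K,
     ('E_P[fun w => (let KR := projT2 (khatri_rao (A ^~ w)) in KR^T *m KR) r s])%E
     = ((\sum_(t : {dffun forall n : 'I_N, 'I_(I n)})
           \big[@hadamard R K K/const_mx 1]_(n < N) Eaa n (t n)) r s)%:E)
  /\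
  (forall n i,
     Eaa n i = (\col_r fine ('E_P[fun w => A n w i r])%E) *m
               (\col_r fine ('E_P[fun w => A n w i r])%E)^T
             + \matrix_(r, s) fine (covariance P (fun w => A n w i r) (fun w => A n w i s))).
Proof.
move=> N0 K0 L2 indep rowind Eaa.
have L1 n i r : (fun w => A n w i r) \in Lfun P 1.
  by apply: Lfun_subset12 => //; exact: fin_num_measure.
have mA n i r : measurable_fun setT (fun w => A n w i r).
  by move: (L1 n i r) => /Lfun1_integrable/integrableP[/measurable_EFinP].
split; last first.
  move=> n i; apply/matrixP => r s; rewrite !mxE big_ord1 !mxE.
  exact: cov_part.
move=> r s.
pose G n := [set E | exists j B, measurable B /\
  E = (fun ir : 'I_(I n) * 'I_K => fun w => A n w ir.1 ir.2) j @^-1` B].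
pose F n := gen_sigma (fun ir : 'I_(I n) * 'I_K => fun w => A n w ir.1 ir.2).
have Fm n B : F n B -> measurable B.
  move=> FB; apply: (smallest_sub (@sigma_algebra_measurable _ T) _ FB).
  move=> E [j [B' [mB' ->]]].
  by have := mA n j.1 j.2 measurableT B' mB'; rewrite setTI.
have FT n : F n setT.
  case: (smallest_sigma_algebra setT (G n)) => h0 hD _.
  by have := hD _ h0; rewrite setD0.
pose X n w := (\sum_(i < I n) A n w i r * A n w i s)%R.
have LX n : X n \in Lfun P 1.
  have -> : X n = (\sum_(i < I n) ((fun w => A n w i r) \* (fun w => A n w i s)))%R.
    by apply/funext => w; rewrite /X fct_sumE.
  by apply: rpred_sum => i _; apply: Lfun2_mul_Lfun1.
have hX n : Hmeas (F n) (X n).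
  have mG : measurable_fun (T := g_sigma_algebraType (G n)) setT (X n).
    rewrite /X; apply: measurable_sum => i; apply: measurable_funM.
    - move=> _ B mB; rewrite setTI; apply: sub_sigma_algebra.
      by exists (i, r), B.
    - move=> _ B mB; rewrite setTI; apply: sub_sigma_algebra.
      by exists (i, s), B.
  by move=> B mB; have := mG measurableT B mB; rewrite setTI.
have e : (fun w => (let KR := projT2 (khatri_rao (A ^~ w)) in KR^T *m KR) r s)
    = (fun w => \prod_n X n w)%R.
  by apply/funext => w; rewrite kr_gram.
rewrite e unlock (prod_signed Fm FT indep LX hX).
congr EFin.
rewrite summxE; under [RHS]eq_bigr => k _ do rewrite (hadamard_prod (fun n => Eaa n (k n))).
rewrite (dffun_distr (fun n i => Eaa n i r s)).
apply: eq_bigr => n _.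
under eq_bigr do rewrite /Eaa mxE.
have fin i : ('E_P[fun w => (A n w i r * A n w i s)%R])%E \is a fin_num.
  exact/expectation_fin_num/Lfun2_mul_Lfun1.
rewrite sum_fine//; congr fine; rewrite /X.
under eq_integral do rewrite -sumEFin.
rewrite integral_sum//.
  by apply: eq_bigr => i _; rewrite unlock.
move=> i; apply/Lfun1_integrable; exact: Lfun2_mul_Lfun1.
Qed.
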